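(* Let $\mathcal H_\mathrm{S},\mathcal H_\mathrm{M},\mathcal H_\mathrm{R}$ be finite-dimensional Hilbert spaces, $\mathcal H_\mathrm{R}=\sum_r E_r|r\rangle\langle r|$ a reservoir Hamiltonian with orthonormal eigenbasis $\{|r\rangle\}$, $\beta>0$, $P_r=e^{-\beta E_r}/\sum_{s}e^{-\beta E_s}$ and $\rho^\mathrm{i}_\mathrm{R}=\sum_r P_r|r\rangle\langle r|$. Let $\rho^\mathrm{i}_\mathrm{SM}$ be a positive definite density operator on $\mathcal H_\mathrm{S}\otimes\mathcal H_\mathrm{M}$, $U_\mathrm{SR}$ a unitary on $\mathcal H_\mathrm{S}\otimes\mathcal H_\mathrm{R}$, $U=U_\mathrm{SR}\otimes 1_\mathrm{M}$, and $\rho^\mathrm{f}_\mathrm{SM}=\mathrm{Tr}_\mathrm{R}[U(\rho^\mathrm{i}_\mathrm{SM}\otimes\rho^\mathrm{i}_\mathrm{R})U^\dagger]$. Fix spectral decompositions $\rho^\mathrm{i}_\mathrm{SM}=\sum_n P_n|n\rangle\langle n|$ and $\rho^\mathrm{f}_\mathrm{SM}=\sum_{n'}\tilde P_{n'}|n'\rangle\langle n'|$ (orthonormal eigenbases). For a trajectory $\gamma=(n,r,n',r')$ define $P_\mathrm{F}[\gamma]=|\langle n',r'|U|n,r\rangle|^2P_nP_r$ and the stochastic conditional entropy production $\sigma_\mathrm{S|M}(\gamma)=-\ln\tilde P_{n'}+\ln P_n+\beta(E_{r'}-E_r)$. Then $$\langle e^{-\sigma_\mathrm{S|M}}\rangl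e:=\sum_{\gamma:\,P_\mathrm{F}[\gamma]>0}P_\mathrm{F}[\gamma]\,e^{-\sigma_\mathrm{S|M}(\gamma)}=1.$$
   Context: The trajectories correspond to a two-point projective measurement in the joint eigenbasis of the system–memory state (initial and final) and in the energy eigenbasis of the reservoir, with the memory not evolving. The convention $e^{-\infty}=0$ is used if $\tilde P_{n'}=0$. In the paper, $\sigma_\mathrm{S|M}$ is written as $\Delta s_\mathrm{S|M}+\beta q_\mathrm{R}$ with $\Delta s_\mathrm{S|M}=-\ln(\tilde P_{n'}/P_b)+\ln(P_n/P_b)$ ($P_b$ eigenvalues of $\rho^\mathrm{i}_\mathrm{M}$, which cancel) and $q_\mathrm{R}=E_{r'}-E_r$. *)

(* Defs.v *)
From HB Require Import structures.
From mathcomp Require Import all_boot all_order all_algebra.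
From mathcomp Require Import reals.
From mathcomp.analysis Require Import sequences exp.
From mathcomp Require Import complex mxtens.
Set Implicit Arguments. Unset Strict Implicit. Unset Printing Implicit Defensive.
Import Order.TTheory GRing.Theory Num.Theory.
Local Open Scope ring_scope.
Local Open Scope complex_scope.

Section QuantumDefs.
Variable R : realType.
Local Notation C := R[i].

Definition dagger {m n} (A : 'M[C]_(m, n)) : 'M[C]_(n, m) := (map_mx Num.conj A)^T.

Definition unitary {n} (A : 'M[C]_n) : Prop := dagger A *m A = 1%:M.

Definition hermitian {n} (A : 'M[C]_n) : Prop := dagger A = A.

Definition posdef {n} (A : 'M[C]_n) : Prop :=
  hermitian A /\ forall x : 'cV[C]_n, x != 0 -> 0 < \tr (dagger x *m A *m x).

Definition posdef_density {n} (A : 'M[C]_n) : Prop := posdef A /\ \tr A = 1.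

Definition rdiag {n} (p : 'I_n -> R) : 'M[C]_n := diag_mx (\row_k (p k)%:C).

Definition gibbs {r} (beta : R) (E : 'I_r -> R) (k : 'I_r) : R :=
  expR (- (beta * E k)) / \sum_(l < r) expR (- (beta * E l)).

(* rho_R = sum_r P_r |r><r|, with |r> the k-th column of the unitary Q *)
Definition gibbs_state {r} (beta : R) (E : 'I_r -> R) (Q : 'M[C]_r) : 'M[C]_r :=
  Q *m rdiag (gibbs beta E) *m dagger Q.

(* The space H_S (x) H_M (x) H_R is represented as 'I_(s*m*r) via mxtens
   indexing ((a, mu), rho).  The operator U_SR (x) 1_M naturally acts on
   'I_(s*r*m) ((a, rho), mu); [swapRM] is the permutation (unitary)
   identifying the two orderings. *)
Definition swapRM (s m r : nat) : 'M[C]_(s * m * r, s * r * m) :=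
  \matrix_(i, j)
    (let: (sm, rr) := mxtens_unindex i in
     let: (a, mu) := mxtens_unindex sm in
     let: (sr, mu') := mxtens_unindex j in
     let: (a', rr') := mxtens_unindex sr in
     ((a == a') && (mu == mu') && (rr == rr'))%:R).

Definition liftU {s r : nat} (m : nat) (U_SR : 'M[C]_(s * r)) : 'M[C]_(s * m * r) :=
  swapRM s m r *m (tensmx U_SR (1%:M : 'M[C]_m)) *m (swapRM s m r)^T.

Definition ptrace2 {a b} (A : 'M[C]_(a * b)) : 'M[C]_a :=
  \matrix_(i, j) \sum_(k < b) A (mxtens_index (i, k)) (mxtens_index (j, k)).

Definition final_state {s m r : nat} (U_SR : 'M[C]_(s * r))
  (rhoSM : 'M[C]_(s * m)) (rhoR : 'M[C]_r) : 'M[C]_(s * m) :=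
  ptrace2 (liftU m U_SR *m tensmx rhoSM rhoR *m dagger (liftU m U_SR)) : 'M[C]_(s * m).

(* transition amplitude <n', r'| U |n, r> ; the 1x1 matrix is read off by its trace *)
Definition amplitude {s m r : nat} (U_SR : 'M[C]_(s * r))
  (V W : 'M[C]_(s * m)) (Q : 'M[C]_r) (n : 'I_(s * m)) (k : 'I_r)
  (n' : 'I_(s * m)) (k' : 'I_r) : C :=
  \tr (dagger (tensmx (col n' W) (col k' Q)) *m liftU m U_SR
         *m tensmx (col n V) (col k Q)).

Definition sqmod (z : C) : R := let: a +i* b := z in a ^+ 2 + b ^+ 2.

Definition PF {s m r : nat} (beta : R) (E : 'I_r -> R) (Q : 'M[C]_r)
  (U_SR : 'M[C]_(s * r)) (V W : 'M[C]_(s * m)) (Pn : 'I_(s * m) -> R)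
  (n : 'I_(s * m)) (k : 'I_r) (n' : 'I_(s * m)) (k' : 'I_r) : R :=
  sqmod (amplitude U_SR V W Q n k n' k') * Pn n * gibbs beta E k.

Definition sigmaSM {s m r : nat} (beta : R) (E : 'I_r -> R)
  (Pn Pt : 'I_(s * m) -> R) (n : 'I_(s * m)) (k : 'I_r) (n' : 'I_(s * m)) (k' : 'I_r) : R :=
  - ln (Pt n') + ln (Pn n) + beta * (E k' - E k).

(* e^{-sigma}, with the convention e^{-infty} = 0 when Pt_{n'} = 0 *)
Definition exp_neg_sigma {s m r : nat} (beta : R) (E : 'I_r -> R)
  (Pn Pt : 'I_(s * m) -> R) (n : 'I_(s * m)) (k : 'I_r) (n' : 'I_(s * m)) (k' : 'I_r) : R :=
  if Pt n' == 0 then 0 else expR (- sigmaSM beta E Pn Pt n k n' k').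

End QuantumDefs.

(* Main.v *)
Require Import Defs.
From HB Require Import structures.
From mathcomp Require Import all_boot all_order all_algebra.
From mathcomp Require Import reals ring.
From mathcomp.analysis Require Import sequences exp.
From mathcomp Require Import complex mxtens.
Set Implicit Arguments. Unset Strict Implicit. Unset Printing Implicit Defensive.
Import Order.TTheory GRing.Theory Num.Theory.
Local Open Scope ring_scope.
Local Open Scope complex_scope.

Section Aux.
Variable R : realType.
Local Notation C := R[i].

Lemma dagger_mul m n p (A : 'M[C]_(m,n)) (B : 'M[C]_(n,p)) :
  dagger (A *m B) = dagger B *m dagger A.
Proof. by rewrite /dagger map_mxM trmx_mul. Qed.

Lemma daggerK m n (A : 'M[C]_(m,n)) : dagger (dagger A) = A.
Proof. by apply/matrixP => i j; rewrite /dagger !mxE conjCK. Qed.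

Lemma dagger_tens m n p q (A : 'M[C]_(m,n)) (B : 'M[C]_(p,q)) :
  dagger (A *t B) = dagger A *t dagger B.
Proof.
apply/matrixP => i j; rewrite /dagger !mxE; by rewrite rmorphM.
Qed.

Lemma dagger1 n : dagger (1%:M : 'M[C]_n) = 1%:M.
Proof. by apply/matrixP => i j; rewrite /dagger !mxE rmorphMn rmorph1 eq_sym. Qed.

Lemma tens11 a b : (1%:M : 'M[C]_a) *t (1%:M : 'M[C]_b) = 1%:M.
Proof.
apply/matrixP=> i j; case: (mxtens_indexP i)=> i1 i2; case: (mxtens_indexP j)=> j1 j2.
rewrite tensmxE !mxE -natrM mulnb (can_eq (@mxtens_indexK a b)) xpair_eqE //.
Qed.

Lemma sum_tens (T : nmodType) a b (F : 'I_(a*b) -> T) :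
  \sum_(j < a*b) F j = \sum_(i < a) \sum_(k < b) F (mxtens_index (i,k)).
Proof.
rewrite pair_big /= (reindex (@mxtens_index a b)) /=.
  by apply: eq_bigr => -[i k].
by exists (@mxtens_unindex a b) => x _; rewrite (mxtens_indexK, mxtens_unindexK).
Qed.

Lemma unitaryC n (A : 'M[C]_n) : unitary A -> A *m dagger A = 1%:M.
Proof. by move/mulmx1C. Qed.

Lemma unitary_tens a b (A : 'M[C]_a) (B : 'M[C]_b) :
  unitary A -> unitary B -> unitary (A *t B).
Proof. by rewrite /unitary dagger_tens tensmx_mul => -> ->; rewrite tens11. Qed.


Lemma sum_delta n (x : 'I_n) (F : 'I_n -> C) :
  \sum_(i < n) (i == x)%:R * F i = F x.
Proof.
rewrite (bigD1 x) //= eqxx mul1r big1 ?addr0 // => i /negbTE ->; by rewrite mul0r.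
Qed.

Section Swap.
Variables s m r : nat.

Definition fsw (j : 'I_(s * r * m)) : 'I_(s * m * r) :=
  let: (sr, mu) := mxtens_unindex j in let: (a, rr) := mxtens_unindex sr in
  mxtens_index (mxtens_index (a, mu), rr).
Definition gsw (i : 'I_(s * m * r)) : 'I_(s * r * m) :=
  let: (sm, rr) := mxtens_unindex i in let: (a, mu) := mxtens_unindex sm in
  mxtens_index (mxtens_index (a, rr), mu).

Lemma fswK : cancel fsw gsw.
Proof.
move=> j; case: (mxtens_indexP j) => sr mu; case: (mxtens_indexP sr) => a rr.
by rewrite /fsw /gsw !mxtens_indexK.
Qed.
Lemma gswK : cancel gsw fsw.
Proof.
move=> j; case: (mxtens_indexP j) => sr mu; case: (mxtens_indexP sr) => a rr.
by rewrite /fsw /gsw !mxtens_indexK.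
Qed.

Lemma swapRM_E i j : swapRM R s m r i j = (i == fsw j)%:R.
Proof.
case: (mxtens_indexP i) => sm rr; case: (mxtens_indexP sm) => a mu.
case: (mxtens_indexP j) => sr mu'; case: (mxtens_indexP sr) => a' rr'.
rewrite /fsw mxE !mxtens_indexK /=.
by rewrite (can_eq (@mxtens_indexK _ _)) xpair_eqE (can_eq (@mxtens_indexK _ _)) xpair_eqE.
Qed.

Lemma eq_fsw i j : (i == fsw j) = (gsw i == j).
Proof. by rewrite -{1}(gswK i) (inj_eq (can_inj fswK)). Qed.

Lemma swapTS : (swapRM R s m r)^T *m swapRM R s m r = 1%:M.
Proof.
apply/matrixP => j j'; rewrite mxE [RHS]mxE.
under eq_bigr do rewrite [(_^T) _ _]mxE !swapRM_E.
by rewrite sum_delta (inj_eq (can_inj fswK)).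
Qed.

Lemma swapST : swapRM R s m r *m (swapRM R s m r)^T = 1%:M.
Proof.
apply/matrixP => i i'; rewrite mxE [RHS]mxE.
under eq_bigr do rewrite [(_^T) _ _]mxE !swapRM_E !eq_fsw (eq_sym (gsw i)).
by rewrite sum_delta (inj_eq (can_inj gswK)) eq_sym.
Qed.

Lemma map_swap : map_mx Num.conj (swapRM R s m r) = swapRM R s m r.
Proof. by apply/matrixP => i j; rewrite mxE swapRM_E rmorph_nat. Qed.

Lemma dagger_swap : dagger (swapRM R s m r) = (swapRM R s m r)^T.
Proof.
rewrite /dagger; congr trmx; apply/matrixP => i j; by rewrite mxE swapRM_E rmorph_nat.
Qed.

Lemma liftU_unitary (U : 'M[C]_(s * r)) : unitary U -> unitary (liftU m U).
Proof.
move=> hU; rewrite /unitary /liftU !dagger_mul /dagger map_trmx trmxK.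
rewrite -/(dagger (swapRM R s m r)) dagger_swap.
rewrite -/(dagger (U *t 1%:M)) dagger_tens dagger1.
rewrite !mulmxA -(mulmxA _ (swapRM R s m r)^T) swapTS mulmx1 map_swap.
by rewrite -(mulmxA (swapRM R s m r)) tensmx_mul hU mul1mx tens11 mulmx1 swapST.
Qed.

End Swap.


Lemma tens_col a b c d (A : 'M[C]_(a,b)) (B : 'M[C]_(c,d)) i k :
  col i A *t col k B = col (mxtens_index (i,k)) (A *t B).
Proof.
apply/matrixP => p q; case: (mxtens_indexP p) => p1 p2.
by rewrite !mxE !mxtens_indexK.
Qed.

Lemma entry_row_col a b c d (X : 'M[C]_(a,b)) (Y : 'M[C]_(a,c)) (Z : 'M[C]_(c,d)) j i :
  (dagger (col j X) *m Y *m col i Z) 0 0 = (dagger X *m Y *m Z) j i.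
Proof.
rewrite !mxE; apply: eq_bigr => k _; rewrite !mxE; congr (_ * _).
by apply: eq_bigr => l _; rewrite !mxE.
Qed.

Lemma tr_row_col a b c d (X : 'M[C]_(a,b)) (Y : 'M[C]_(a,c)) (Z : 'M[C]_(c,d)) j i :
  \tr (dagger (col j X) *m Y *m col i Z) = (dagger X *m Y *m Z) j i.
Proof. by rewrite /mxtrace big_ord1 entry_row_col. Qed.

Lemma sqmodE (z : C) : (sqmod z)%:C = z * Num.conj z.
Proof. by rewrite -normCK -add_Re2_Im2; case: z. Qed.

Lemma sqmod_ge0 (z : C) : 0 <= sqmod z.
Proof. by case: z => a b /=; rewrite addr_ge0 // sqr_ge0. Qed.

Lemma tr_ptrace2 a b (A : 'M[C]_(a * b)) : \tr (ptrace2 A) = \tr A.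
Proof.
by rewrite /mxtrace sum_tens; apply: eq_bigr => i _; rewrite mxE.
Qed.

Lemma tr_tens a b (A : 'M[C]_a) (B : 'M[C]_b) : \tr (A *t B) = \tr A * \tr B.
Proof.
rewrite /mxtrace sum_tens mulr_suml; apply: eq_bigr => i _; rewrite mulr_sumr.
by apply: eq_bigr => k _; rewrite tensmxE.
Qed.

Lemma tr_conj n (X D : 'M[C]_n) : unitary X -> \tr (X *m D *m dagger X) = \tr D.
Proof. by move=> hX; rewrite mxtrace_mulC mulmxA hX mul1mx. Qed.

Lemma tr_rdiag n (p : 'I_n -> R) : \tr (rdiag p) = (\sum_k p k)%:C.
Proof. by rewrite /rdiag mxtrace_diag rmorph_sum; apply: eq_bigr => k _; rewrite mxE. Qed.

Lemma rdiag_tens a b (p : 'I_a -> R) (q : 'I_b -> R) :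
  rdiag p *t rdiag q = rdiag (fun j => p (mxtens_unindex j).1 * q (mxtens_unindex j).2).
Proof.
apply/matrixP=> i j; case: (mxtens_indexP i)=> i1 i2; case: (mxtens_indexP j)=> j1 j2.
rewrite tensmxE /rdiag !mxE !mxtens_indexK /= (can_eq (@mxtens_indexK a b)) xpair_eqE.
by case: eqP; case: eqP => //= _ _; rewrite ?mulr0n ?mulr1n ?mul0r ?mulr0 ?rmorphM.
Qed.


Lemma sum4 (T : comPzRingType) a b e (f h : 'I_a -> T) (u v : 'I_a -> 'I_b -> 'I_e -> T)
  (d : 'I_e -> T) :
  \sum_(i < a) (\sum_(l < a) f l * \sum_(k < b) \sum_(t < e) (u l k t * d t * v i k t)) * h i
  = \sum_(k < b) \sum_(t < e) d t * ((\sum_(l < a) f l * u l k t) * (\sum_(i < a) v i k t * h i)).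
Proof.
transitivity (\sum_(i < a) \sum_(l < a) \sum_(k < b) \sum_(t < e)
   (f l * u l k t * d t * v i k t * h i)).
  apply: eq_bigr => i _; rewrite mulr_suml; apply: eq_bigr => l _.
  rewrite mulr_sumr mulr_suml; apply: eq_bigr => k _.
  rewrite mulr_sumr mulr_suml; apply: eq_bigr => t _.
  by rewrite !mulrA.
transitivity (\sum_(k < b) \sum_(t < e) \sum_(l < a) \sum_(i < a)
   (f l * u l k t * d t * v i k t * h i)); last first.
  apply: eq_bigr => k _; apply: eq_bigr => t _.
  rewrite mulr_suml mulr_sumr; apply: eq_bigr => l _.
  rewrite mulr_sumr mulr_sumr; apply: eq_bigr => i _.
  by rewrite mulrCA !mulrA [_ * d t]mulrC !mulrA.
rewrite exchange_big /=.
under eq_bigr => l _ do (rewrite exchange_big /=; under eq_bigr => k _ do rewrite exchange_big /=).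
rewrite exchange_big /=.
by under eq_bigr => k _ do rewrite exchange_big /=.
Qed.


Lemma ptrace_psd a b (Y : 'M[C]_(a*b)) (dd : 'I_(a*b) -> R) (x : 'cV[C]_a) :
  (forall j, 0 <= dd j) ->
  0 <= (dagger x *m ptrace2 (Y *m rdiag dd *m dagger Y) *m x) 0 0.
Proof.
move=> hd.
have -> : (dagger x *m ptrace2 (Y *m rdiag dd *m dagger Y) *m x) 0 0 =
  \sum_(k < b) \sum_(t < a*b) (dd t)%:C *
    ((\sum_(l < a) Num.conj (x l 0) * Y (mxtens_index (l,k)) t) *
     (\sum_(i < a) Num.conj (Y (mxtens_index (i,k)) t) * x i 0)).
  rewrite -(sum4 (fun l => Num.conj (x l 0)) (fun i => x i 0)
    (fun l k t => Y (mxtens_index (l,k)) t)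
    (fun i k t => Num.conj (Y (mxtens_index (i,k)) t)) (fun t => (dd t)%:C)).
  rewrite /rdiag mul_mx_diag mxE; apply: eq_bigr => i _; rewrite mxE; congr (_ * _).
  apply: eq_bigr => l _; rewrite !mxE; congr (_ * _).
  apply: eq_bigr => k _; rewrite !mxE; apply: eq_bigr => t _; rewrite !mxE.
  by rewrite [_ * (dd t)%:C]mulrC.
apply: sumr_ge0 => k _; apply: sumr_ge0 => t _.
rewrite mulr_ge0 ?ler0c //.
set z := \sum_(l < a) _.
have -> : \sum_(i < a) Num.conj (Y (mxtens_index (i, k)) t) * x i 0 = Num.conj z.
  rewrite /z rmorph_sum; apply: eq_bigr => i _; by rewrite rmorphM /= conjCK mulrC.
exact: (mul_conjC_ge0 z).
Qed.


Lemma sum_sqmodE n (f : 'I_n -> C) :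
  (\sum_(j < n) sqmod (f j))%:C = \sum_(j < n) f j * Num.conj (f j).
Proof. rewrite rmorph_sum; apply: eq_bigr => j _; exact: sqmodE. Qed.

Lemma sum_realC n (f : 'I_n -> R) : (\sum_(j < n) f j)%:C = \sum_(j < n) (f j)%:C.
Proof. by rewrite rmorph_sum. Qed.


Lemma unitary_sandwich n (A X B : 'M[C]_n) : unitary A -> unitary X -> unitary B ->
  (dagger A *m X *m B) *m dagger (dagger A *m X *m B) = 1%:M.
Proof.
move=> hA hX hB; apply: mulmx1C; rewrite !dagger_mul daggerK !mulmxA.
rewrite -(mulmxA _ A) (unitaryC hA) mulmx1.
by rewrite -(mulmxA (dagger B)) hX mulmx1 hB.
Qed.

End Aux.

Theorem theorem4 (R : realType) (s m r : nat) (beta : R)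
  (E : 'I_r -> R) (Q : 'M[R[i]]_r)
  (rho_i : 'M[R[i]]_(s * m)) (U_SR : 'M[R[i]]_(s * r))
  (V : 'M[R[i]]_(s * m)) (Pn : 'I_(s * m) -> R)
  (W : 'M[R[i]]_(s * m)) (Pt : 'I_(s * m) -> R) :
  (0 < r)%N ->
  0 < beta ->
  unitary Q ->
  posdef_density rho_i ->
  unitary U_SR ->
  unitary V -> rho_i = V *m rdiag Pn *m dagger V ->
  unitary W ->
  final_state U_SR rho_i (gibbs_state beta E Q) = W *m rdiag Pt *m dagger W ->
  \sum_(n < s * m) \sum_(k < r) \sum_(n' < s * m) \sum_(k' < r)
     (if 0 < PF beta E Q U_SR V W Pn n k n' k'
      then PF beta E Q U_SR V W Pn n k n' k' * exp_neg_sigma beta E Pn Pt n k n' k'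
      else 0) = 1.
Proof.
move=> hr hbeta hQ [hpos htr] hU hV hrho hW hfin.
have hL : unitary (liftU m U_SR) := @liftU_unitary R s m r U_SR hU.
have hB : unitary (V *t Q) := unitary_tens hV hQ.
have hB' : unitary (W *t Q) := unitary_tens hW hQ.
set M := dagger (W *t Q) *m liftU m U_SR *m (V *t Q).
have hamp n k n' k' : amplitude U_SR V W Q n k n' k'
    = M (mxtens_index (n', k')) (mxtens_index (n, k)).
  by rewrite /amplitude !tens_col tr_row_col.
have hMM : M *m dagger M = 1%:M.
  exact: unitary_sandwich.
have hrow j' : \sum_j sqmod (M j' j) = 1.
  apply: (@complexI R); rewrite sum_sqmodE rmorph1.
  have := hMM; move/matrixP/(_ j' j'); rewrite /dagger !mxE eqxx mulr1n => <-.
  by apply: eq_bigr => j _; rewrite !mxE.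

have hPn n : 0 < Pn n.
  have e : (Pn n)%:C = (dagger V *m rho_i *m V) n n.
    rewrite hrho !mulmxA hV mul1mx -mulmxA hV mulmx1 /rdiag !mxE eqxx mulr1n //.
  have hx : col n V != 0.
    apply/eqP => h0.
    have hk k : V k n = 0 by have := congr1 (fun X : 'cV[R[i]]_(s * m) => X k 0) h0; rewrite !mxE.
    have := hV; move/matrixP/(_ n n); rewrite /dagger !mxE eqxx mulr1n big1.
      by move/eqP; rewrite eq_sym oner_eq0.
    by move=> k _; rewrite !mxE hk mulr0.
  have := hpos.2 _ hx; rewrite tr_row_col -e ltcE /= => /andP[_].
  done.

have hZ : 0 < \sum_(l < r) expR (- (beta * E l)).
  rewrite (bigD1 (Ordinal hr)) //=.
  apply: (lt_le_trans (expR_gt0 (- (beta * E (Ordinal hr))))).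
  by rewrite lerDl sumr_ge0 // => i _; exact: expR_ge0.
have hg k : 0 < gibbs beta E k by apply: divr_gt0 => //; exact: expR_gt0.
have hgs : \sum_(k < r) gibbs beta E k = 1.
  by rewrite /gibbs -mulr_suml divff // lt0r_neq0.
have hrhoR : rho_i *t gibbs_state beta E Q = (V *t Q) *m
    rdiag (fun j => Pn (mxtens_unindex j).1 * gibbs beta E (mxtens_unindex j).2)
    *m dagger (V *t Q).
  by rewrite hrho /gibbs_state dagger_tens -rdiag_tens !tensmx_mul.
have hPt0 n' : 0 <= Pt n'.
  have e : (Pt n')%:C = (dagger W *m final_state U_SR rho_i (gibbs_state beta E Q) *m W) n' n'.
    rewrite hfin !mulmxA hW mul1mx -mulmxA hW mulmx1 /rdiag !mxE eqxx mulr1n //.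
  rewrite -ler0c e -entry_row_col /final_state hrhoR.
  set LL := liftU m U_SR.
  have -> : LL *m ((V *t Q) *m rdiag (fun j => Pn (mxtens_unindex j).1 * gibbs beta E (mxtens_unindex j).2)
    *m dagger (V *t Q)) *m dagger LL = (LL *m (V *t Q)) *m rdiag (fun j => Pn (mxtens_unindex j).1 * gibbs beta E (mxtens_unindex j).2)
    *m dagger (LL *m (V *t Q)) by rewrite dagger_mul !mulmxA.
  apply: ptrace_psd => j; apply: mulr_ge0; exact: ltW.
have hPts : \sum_(n' < s * m) Pt n' = 1.
  apply: (@complexI R); rewrite -tr_rdiag -(@tr_conj _ _ W (rdiag Pt) hW) -hfin rmorph1.
  rewrite /final_state tr_ptrace2 tr_conj // tr_tens htr mul1r /gibbs_state tr_conj //.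
  by rewrite tr_rdiag hgs.

pose F (j j' : 'I_(s * m * r)) := sqmod (M j' j) * Pt (mxtens_unindex j').1
   * gibbs beta E (mxtens_unindex j').2.
have hterm n k n' k' :
  (if 0 < PF beta E Q U_SR V W Pn n k n' k'
      then PF beta E Q U_SR V W Pn n k n' k' * exp_neg_sigma beta E Pn Pt n k n' k'
      else 0) = F (mxtens_index (n, k)) (mxtens_index (n', k')).
  rewrite /F !mxtens_indexK /= /PF hamp.
  set q := sqmod _.
  have hq : 0 <= q := sqmod_ge0 _.
  have key : q * Pn n * gibbs beta E k * exp_neg_sigma beta E Pn Pt n k n' k'
      = q * Pt n' * gibbs beta E k'.
    rewrite /exp_neg_sigma; case: eqP => [->|hne]; first by rewrite !mulr0 mul0r.
    have hpt : 0 < Pt n' by rewrite lt_def (hPt0 n') andbT; apply/eqP.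
    have eP : expR (ln (Pn n)) = Pn n by apply: lnK; rewrite posrE.
    have eT : expR (ln (Pt n')) = Pt n' by apply: lnK; rewrite posrE.
    have hexp : expR (- sigmaSM beta E Pn Pt n k n' k') * Pn n * expR (- (beta * E k))
        = Pt n' * expR (- (beta * E k')).
      rewrite -eP -eT -!expRD; congr expR; rewrite /sigmaSM; ring.
    rewrite /gibbs.
    transitivity (q * (expR (- sigmaSM beta E Pn Pt n k n' k') * Pn n * expR (- (beta * E k)))
       / \sum_(l < r) expR (- (beta * E l))); first by ring.
    by rewrite hexp; ring.
  case: ifP => hpf; first exact: key.
  have hq0 : q == 0.
    by move: hpf; rewrite (pmulr_lgt0 _ (hg k)) (pmulr_lgt0 _ (hPn n)) lt_def hq andbT => /negbT; rewrite negbK.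
  by rewrite (eqP hq0) !mul0r.
transitivity (\sum_(j < s * m * r) \sum_(j' < s * m * r) F j j').
  rewrite [RHS]sum_tens; apply: eq_bigr => n _; apply: eq_bigr => k _.
  rewrite [RHS]sum_tens; apply: eq_bigr => n' _; apply: eq_bigr => k' _.
  exact: hterm.
rewrite exchange_big /=.
transitivity (\sum_(j' < s * m * r) Pt (mxtens_unindex j').1 * gibbs beta E (mxtens_unindex j').2).
  apply: eq_bigr => j' _; rewrite /F -!mulr_suml hrow mul1r //.
by rewrite -mulr_sum hPts hgs mulr1.
Qed.
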